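(* For every integer $n \ge 6$, $\gamma^{\rm ID}(K_n \times K_{2n-5}) = 2n-4$.
   Context: For a graph $G$ and vertex $x$, $N[x]$ denotes the closed neighborhood of $x$. A set $C \subseteq V(G)$ is an identifying code (ID code) of $G$ if $C$ is a dominating set of $G$ and $N[x]\cap C \ne N[y]\cap C$ for every pair of distinct vertices $x,y$. $\gamma^{\rm ID}(G)$ is the minimum cardinality of an ID code of $G$. The direct product $G_1\times G_2$ has vertex set $V(G_1)\times V(G_2)$, with $(u_1,u_2)$ adjacent to $(v_1,v_2)$ iff $u_1v_1\in E(G_1)$ and $u_2v_2 \in E(G_2)$. $K_n$ is the complete graph on vertex set $[n]=\{1,\dots,n\}$; thus in $K_n\times K_m$ two vertices are adjacent iff they differ in both coordinates. *)

(* Defs.v *)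
From mathcomp Require Import all_boot.
Set Implicit Arguments. Unset Strict Implicit. Unset Printing Implicit Defensive.

(* A simple graph is given by an adjacency relation e on a finite type T
   (assumed symmetric and irreflexive by the caller). *)

Definition closed_nbhd (T : finType) (e : rel T) (x : T) : {set T} :=
  [set y | (y == x) || e x y].

Definition is_idcode (T : finType) (e : rel T) (C : {set T}) : bool :=
  [forall x, closed_nbhd e x :&: C != set0] &&
  [forall x, forall y, (x != y) ==> (closed_nbhd e x :&: C != closed_nbhd e y :&: C)].

(* gamma^ID(G): minimum cardinality of an ID code
   (value #|T|.+1 if no ID code exists). *)
Definition gammaID (T : finType) (e : rel T) : nat :=
  \big[minn/#|T|.+1]_(C : {set T} | is_idcode e C) #|C|.

Definition Kn_rel (n : nat) : rel 'I_n := fun u v => u != v.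
Arguments Kn_rel n : clear implicits.

Definition direct_prod (T1 T2 : finType) (e1 : rel T1) (e2 : rel T2)
  : rel (T1 * T2)%type :=
  fun u v => e1 u.1 v.1 && e2 u.2 v.2.

Definition KxK (n m : nat) : rel ('I_n * 'I_m)%type :=
  direct_prod (Kn_rel n) (Kn_rel m).
Arguments KxK n m : clear implicits.

(* Main.v *)
Require Import Defs.
From mathcomp Require Import all_boot zify.
Set Implicit Arguments. Unset Strict Implicit. Unset Printing Implicit Defensive.

Section S.
Variables n m : nat.
Notation T := ('I_n * 'I_m)%type.
Notation N x := (closed_nbhd (KxK n m) x).

Ltac bsimp := repeat (match goal with
  | H : is_true (?a != ?b) |- context[?a == ?b] => rewrite (negbTE H)
  | H : is_true (?a != ?b) |- context[?b == ?a] => rewrite (eq_sym b a) (negbTE H)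
  end); rewrite ?eqxx /= ?andbF ?andbT ?orbF ?orbT.

Lemma inN (x y : T) : (y \in N x) = (y == x) || ((x.1 != y.1) && (x.2 != y.2)).
Proof. by rewrite inE. Qed.

Lemma idsep (C : {set T}) x y : is_idcode (KxK n m) C -> x != y -> N x :&: C != N y :&: C.
Proof. by case/andP=> _ /forallP /(_ x) /forallP /(_ y) /implyP; apply. Qed.

Lemma K2 (C : {set T}) i k j l : i != k -> j != l ->
  (forall c, (i,c) \in C -> c = j) -> (forall c, (k,c) \in C -> c = l) ->
  (forall r, (r,j) \in C -> r = i) -> (forall r, (r,l) \in C -> r = k) ->
  N (i,l) :&: C = N (k,j) :&: C.
Proof.
move=> ik jl Ri Rk Cj Cl; apply/setP=> [[r c]]; rewrite !inE /KxK /direct_prod /Kn_rel /=.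
case rc: ((r,c) \in C); rewrite ?andbF ?andbT //.
rewrite !xpair_eqE.
have [ri|ri] := eqVneq r i.
  subst r; have := Ri _ rc => ->. by bsimp.
have [rk|rk] := eqVneq r k.
  subst r; have := Rk _ rc => ->. by bsimp.
have cj : c != j by apply/eqP=> e; subst c; move: ri; rewrite (Cj _ rc) eqxx.
have cl : c != l by apply/eqP=> e; subst c; move: rk; rewrite (Cl _ rc) eqxx.
by bsimp.
Qed.

Lemma P3 (C : {set T}) i k j l : i != k -> j != l ->
  (forall c, (i,c) \in C -> c = j) -> (forall c, (k,c) \in C -> c = j) ->
  (forall r, (r,j) \in C -> (r == i) || (r == k)) -> (forall r, (r,l) \notin C) ->
  N (i,l) :&: C = N (k,j) :&: C.
Proof.
move=> ik jl Ri Rk Cj Cl; apply/setP=> [[r c]]; rewrite !inE /KxK /direct_prod /Kn_rel /=.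
case rc: ((r,c) \in C); rewrite ?andbF ?andbT //.
rewrite !xpair_eqE.
have cl : c != l by apply/eqP=> e; subst c; move: (Cl r); rewrite rc.
have [ri|ri] := eqVneq r i.
  subst r; have := Ri _ rc => ->. by bsimp.
have [rk|rk] := eqVneq r k.
  subst r; have := Rk _ rc => ->. by bsimp.
have cj : c != j by apply/eqP=> e; subst c; move: (Cj _ rc); rewrite (negbTE ri) (negbTE rk).
by bsimp.
Qed.

Lemma Erow (C : {set T}) i k j : i != k -> (forall c, (i,c) \notin C) -> (forall c, (k,c) \notin C) ->
  N (i,j) :&: C = N (k,j) :&: C.
Proof.
move=> ik Ri Rk; apply/setP=> [[r c]]; rewrite !inE /KxK /direct_prod /Kn_rel /= !xpair_eqE.
case rc: ((r,c) \in C); rewrite ?andbF ?andbT //.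
have [e|ri] := eqVneq r i. by subst r; move: (Ri c); rewrite rc.
have [e|rk] := eqVneq r k. by subst r; move: (Rk c); rewrite rc.
by bsimp.
Qed.

Lemma Ecol (C : {set T}) i j l : j != l -> (forall r, (r,j) \notin C) -> (forall r, (r,l) \notin C) ->
  N (i,j) :&: C = N (i,l) :&: C.
Proof.
move=> jl Cj Cl; apply/setP=> [[r c]]; rewrite !inE /KxK /direct_prod /Kn_rel /= !xpair_eqE.
case rc: ((r,c) \in C); rewrite ?andbF ?andbT //.
have [e|cj] := eqVneq c j. by subst c; move: (Cj r); rewrite rc.
have [e|cl] := eqVneq c l. by subst c; move: (Cl r); rewrite rc.
by bsimp.
Qed.
End S.

Section S.
Variables n m : nat.
Notation T := ('I_n * 'I_m)%type.
Variable C : {set T}.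
Definition rowset i := [set c | (i,c) \in C].
Definition colset j := [set r | (r,j) \in C].

Lemma card_sum : #|C| = \sum_(x : T) (x \in C).
Proof. by rewrite -sum1_card big_mkcond. Qed.

Lemma sum_rows : #|C| = \sum_i #|rowset i|.
Proof.
have -> : #|C| = \sum_i \sum_c (((i,c) \in C) : nat).
  by rewrite pair_big card_sum; apply: eq_big => // -[].
apply: eq_bigr => i _; rewrite -sum1_card [RHS]big_mkcond /=; apply: eq_bigr => c _.
by rewrite inE; case: ((i,c) \in C).
Qed.

Lemma sum_cols : #|C| = \sum_j #|colset j|.
Proof.
have -> : #|C| = \sum_i \sum_c (((i,c) \in C) : nat).
  by rewrite pair_big card_sum; apply: eq_big => // -[].
rewrite exchange_big.
apply: eq_bigr => j _; rewrite -sum1_card [RHS]big_mkcond /=; apply: eq_bigr => r _.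
by rewrite inE; case: ((r,j) \in C).
Qed.
End S.

Lemma cardsum (T : finType) (A : {set T}) : #|A| = \sum_x (x \in A).
Proof. by rewrite -sum1_card big_mkcond. Qed.

Section L.
Variables n m : nat.
Notation T := ('I_n * 'I_m)%type.
Variable C : {set T}.
Hypothesis Hid : is_idcode (KxK n m) C.
Hypothesis hC : #|C| <= m.
Hypothesis hm : m + 5 = 2 * n.
Hypothesis hn : 6 <= n.
Notation d i := #|rowset C i|.
Notation e j := #|colset C j|.
Notation N x := (closed_nbhd (KxK n m) x).

Lemma m0 : 0 < m. Proof. lia. Qed.
Lemma n0 : 0 < n. Proof. lia. Qed.

Lemma empty_rows : #|[set i | d i == 0]| <= 1.
Proof.
rewrite leqNgt; apply/negP=> /card_gt1P [i [k [Hi Hk ik]]].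
move: Hi Hk; rewrite !inE !cards_eq0 => /eqP Hi /eqP Hk.
have R x : rowset C x = set0 -> forall c, (x,c) \notin C.
  by move=> h c; apply/negP => hc; move: h; move/setP/(_ c); rewrite !inE hc.
have neq : (i, Ordinal m0) != (k, Ordinal m0) by rewrite xpair_eqE negb_and ik.
by move: (idsep Hid neq); rewrite (Erow (Ordinal m0) ik (R _ Hi) (R _ Hk)) eqxx.
Qed.

Lemma empty_cols : #|[set j | e j == 0]| <= 1.
Proof.
rewrite leqNgt; apply/negP=> /card_gt1P [i [k [Hi Hk ik]]].
move: Hi Hk; rewrite !inE !cards_eq0 => /eqP Hi /eqP Hk.
have R x : colset C x = set0 -> forall c, (c,x) \notin C.
  by move=> h c; apply/negP => hc; move: h; move/setP/(_ c); rewrite !inE hc.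
have neq : (Ordinal n0, i) != (Ordinal n0, k) by rewrite xpair_eqE negb_and ik orbT.
by move: (idsep Hid neq); rewrite (Ecol (Ordinal n0) ik (R _ Hi) (R _ Hk)) eqxx.
Qed.

Lemma row_count : 3 <= #|[set i | d i == 1]|.
Proof.
have h1 : \sum_(i < n) 2 <= \sum_i d i + \sum_i (i \in [set i | d i == 1]) + 2 * \sum_i (i \in [set i | d i == 0]).
  rewrite big_distrr -!big_split /=; apply: leq_sum => i _; rewrite !inE.
  by case: (d i) => [|[|k]].
move: h1; rewrite -!cardsum -sum_rows sum_nat_const card_ord.
have := empty_rows; lia.
Qed.

Lemma col_sum : \sum_j (e j - 1) <= 1.
Proof.
have h1 : \sum_(j < m) 1 + \sum_j (e j - 1) <= \sum_j e j + \sum_j (j \in [set j | e j == 0]).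
  rewrite -!big_split /=; apply: leq_sum => i _; rewrite !inE.
  by case: (e i) => [|k] //=; rewrite subn1 /= add1n addn0.
move: h1; rewrite -!cardsum -sum_cols sum_nat_const card_ord.
have := empty_cols; lia.
Qed.

Lemma col_sum2 : \sum_j (e j - 1) <= #|[set j | e j == 0]|.
Proof.
have h1 : \sum_(j < m) 1 + \sum_j (e j - 1) <= \sum_j e j + \sum_j (j \in [set j | e j == 0]).
  rewrite -!big_split /=; apply: leq_sum => i _; rewrite !inE.
  by case: (e i) => [|k] //=; rewrite subn1 /= add1n addn0.
move: h1; rewrite -!cardsum -sum_cols sum_nat_const card_ord.
lia.
Qed.

Lemma F1 j : e j <= 2.
Proof.
have := col_sum; rewrite (bigD1 j) //=; lia.
Qed.

Lemma F2 j j' : j != j' -> 2 <= e j -> 2 <= e j' -> False.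
Proof.
move=> jj h h'; have := col_sum; rewrite (bigD1 j) //= (bigD1 j') /=; last by rewrite eq_sym.
set x := #|colset C j|. set y := #|colset C j'|. lia.
Qed.

Lemma F3 j : 2 <= e j -> exists l, forall r, (r,l) \notin C.
Proof.
move=> h; have := col_sum2; rewrite (bigD1 j) //=.
move=> h2; set x := #|colset C j| in h h2; have : 0 < #|[set j | e j == 0]| by apply: leq_trans h2; lia.
case/card_gt0P => l; rewrite inE cards_eq0 => /eqP hl; exists l => r.
by apply/negP => hr; move: hl; move/setP/(_ r); rewrite !inE hr.
Qed.

Lemma rowfun a : d a == 1 -> exists ca, forall c, ((a,c) \in C) = (c == ca).
Proof.
case/cards1P => ca h; exists ca => c; move: h; move/setP/(_ c); by rewrite !inE.
Qed.

Lemma col1 j a : e j <= 1 -> (a,j) \in C -> forall r, (r,j) \in C -> r = a.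
Proof.
move=> h ha r hr; apply/eqP; apply/negPn/negP => ra.
have : 1 < e j by apply/card_gt1P; exists r, a; rewrite !inE hr ha.
lia.
Qed.

Lemma col2 j b c : (b,j) \in C -> (c,j) \in C -> b != c -> forall r, (r,j) \in C -> (r == b) || (r == c).
Proof.
move=> hb hc bc r hr; apply/negPn/negP; rewrite negb_or => /andP[rb rc].
have : 2 < e j by apply/card_gt2P; exists r, b, c; rewrite !inE hr hb hc rb bc eq_sym rc.
have := F1 j; lia.
Qed.

Lemma contra_eq i k j l : i != k -> N ((i,l)) :&: C = N ((k,j)) :&: C -> False.
Proof.
move=> ik h; have neq : (i,l) != (k,j) by rewrite xpair_eqE negb_and ik.
by move: (idsep Hid neq); rewrite h eqxx.
Qed.

Lemma caseA a b c ca cb cc : a != b -> b != c -> c != a ->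
  (forall x, ((a,x) \in C) = (x == ca)) ->
  (forall x, ((b,x) \in C) = (x == cb)) ->
  (forall x, ((c,x) \in C) = (x == cc)) ->
  e ca <= 1 -> False.
Proof.
move=> ab bc ca_ Ra Rb Rc ea.
have ha : (a,ca) \in C by rewrite Ra.
have hb : (b,cb) \in C by rewrite Rb.
have hc : (c,cc) \in C by rewrite Rc.
have cab : ca != cb.
  apply/negP => /eqP e1; subst cb; move: ab; by rewrite (col1 ea ha hb) eqxx.
have cac : ca != cc.
  apply/negP => /eqP e1; subst cc; move: ca_; by rewrite (col1 ea ha hc) eqxx.
have ri r x : (r,x) \in C -> ((r == a) -> x = ca) * ((r == b) -> x = cb) * ((r == c) -> x = cc).
  move=> h; split; [split|]; move/eqP=> e1; subst r; apply/eqP.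
  - by rewrite -Ra. - by rewrite -Rb. - by rewrite -Rc.
have [eb|eb] := leqP (e cb) 1.
  apply: (contra_eq (i:=a) (k:=b) (j:=ca) (l:=cb)) => //.
  apply: K2 => //.
  - by move=> x; rewrite Ra => /eqP.
  - by move=> x; rewrite Rb => /eqP.
  - by move=> r; apply: col1.
  - by move=> r; apply: col1.
have [ec|ec] := leqP (e cc) 1.
  apply: (contra_eq (i:=a) (k:=c) (j:=ca) (l:=cc)) => //; first by rewrite eq_sym.
  apply: K2 => //; first by rewrite eq_sym.
  - by move=> x; rewrite Ra => /eqP.
  - by move=> x; rewrite Rc => /eqP.
  - by move=> r; apply: col1.
  - by move=> r; apply: col1.
have [e1|bcn] := eqVneq cb cc; last by apply: (F2 bcn).
subst cc.
have [l hl] := F3 eb.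
have lcb : cb != l by apply/negP => /eqP e1; subst l; move: (hl b); rewrite hb.
apply: (contra_eq (i:=b) (k:=c) (j:=cb) (l:=l)) => //.
apply: P3 => //.
- by move=> x; rewrite Rb => /eqP.
- by move=> x; rewrite Rc => /eqP.
- by move=> r; apply: col2.
Qed.

Lemma lower : False.
Proof.
have := row_count; case/card_gt2P => [a [b [c [[Ha Hb Hc] [ab bc ca]]]]].
move: Ha Hb Hc; rewrite !inE => /rowfun [xa Ra] /rowfun [xb Rb] /rowfun [xc Rc].
have [h|ha] := leqP (e xa) 1; first by apply: (caseA ab bc ca Ra Rb Rc h).
have [h|hb] := leqP (e xb) 1.
  by apply: (caseA (a:=b) (b:=c) (c:=a) bc ca ab Rb Rc Ra h).
have [h|hc] := leqP (e xc) 1.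
  by apply: (caseA (a:=c) (b:=a) (c:=b) ca ab bc Rc Ra Rb h).
have [e1|n1] := eqVneq xa xb; last by apply: (F2 n1).
have [e2|n2] := eqVneq xb xc; last by apply: (F2 n2).
subst xb xc.
have : 2 < e xa.
  by apply/card_gt2P; exists a, b, c; rewrite !inE Ra Rb Rc eqxx ab bc ca.
have := F1 xa; lia.
Qed.
End L.

Section U.
Variables n m : nat.
Hypothesis hm : m + 5 = 2 * n.
Hypothesis hn : 6 <= n.

Definition inC (r c : nat) : bool :=
  ((c < m - 2) && (c./2 == r)) || ((c == m - 2) && (n - 3 <= r)).

Definition NN (i j r c : nat) : bool := ((r == i) && (c == j)) || ((r != i) && (c != j)).

Lemma inC_p r : r + 4 <= n -> inC r r.*2.
Proof. rewrite /inC; lia. Qed.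
Lemma inC_q r : r + 5 <= n -> inC r r.*2.+1.
Proof. rewrite /inC; lia. Qed.
Lemma inC_m r : n <= r + 3 -> inC r (m - 2).
Proof. rewrite /inC; lia. Qed.
Lemma inC_col c : c < m - 1 -> inC (if c < m - 2 then c./2 else n - 1) c.
Proof. rewrite /inC; case: ifP; lia. Qed.

Lemma Domnat i j : exists r c, [/\ r < n, c < m, inC r c & NN i j r c].
Proof.
rewrite /NN.
have [h|h] := boolP ((0 != i) && (0 != j)).
  by exists 0, 0; split; [lia|lia|apply: inC_p; lia|lia].
have [h2|h2] := boolP ((1 != i) && (2 != j)).
  by exists 1, 2; split; [lia|lia|apply: (inC_p (r:=1)); lia|lia].
by exists 2, 4; split; [lia|lia|apply: (inC_p (r:=2)); lia|lia].
Qed.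


Definition Gl i j k l r c := (NN i j r c && ~~ NN k l r c) || (~~ NN i j r c && NN k l r c).

Lemma H1 i j k l r c : r = i -> i != k -> c != j -> c != l -> Gl i j k l r c.
Proof. move=> ->; rewrite /Gl /NN; lia. Qed.
Lemma H2 i j k l r c : r = k -> i != k -> c != j -> c != l -> Gl i j k l r c.
Proof. move=> ->; rewrite /Gl /NN; lia. Qed.
Lemma H3 i j k l r c : r != i -> r != k -> j != l -> (c == j) || (c == l) -> Gl i j k l r c.
Proof. rewrite /Gl /NN; lia. Qed.
Lemma H4 i j l r c : j != l -> (c == j) || (c == l) -> Gl i j i l r c.
Proof. rewrite /Gl /NN; lia. Qed.
Lemma H5 i j k r c : r = i -> i != k -> Gl i j k j r c.
Proof. move=> ->; rewrite /Gl /NN; lia. Qed.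

Lemma Sepnat i j k l : i < n -> k < n -> j < m -> l < m -> (i != k) || (j != l) ->
  exists r c, [/\ r < n, c < m, inC r c & Gl i j k l r c].
Proof.
move=> hi hk hj hl hne.
have [ik|ik] := eqVneq i k.
  subst k. have jl : j != l by rewrite eqxx in hne.
  have [jm|jm] := boolP (j < m - 1).
    exists (if j < m - 2 then j./2 else n - 1), j; split; [case: ifP; lia|lia|apply: inC_col; lia|].
    by apply: H4; rewrite ?eqxx.
  exists (if l < m - 2 then l./2 else n - 1), l; split; [case: ifP; lia|lia|apply: inC_col; lia|].
  by apply: H4; rewrite ?eqxx ?orbT.
have [jl|jl] := eqVneq j l.
  subst l.
  have [h|h] := boolP (i + 4 <= n).
    by exists i, i.*2; split; [lia|lia|apply: inC_p|apply: H5].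
  by exists i, (m - 2); split; [lia|lia|apply: inC_m; lia|apply: H5].
have Rk : forall k, k < n -> exists c, [/\ c < m, inC k c & (k + 4 <= n) && (c == k.*2) || (n < k + 4) && (c == m - 2)].
  move=> x hx; have [h|h] := boolP (x + 4 <= n).
    by exists x.*2; split; [lia|apply: inC_p|lia].
  by exists (m - 2); split; [lia|apply: inC_m; lia|lia].
have [hi5|hi5] := boolP (i + 5 <= n).
  have [a|a] := boolP ((i.*2 != j) && (i.*2 != l)).
    case/andP: a => a1 a2.
    by exists i, i.*2; split; [lia|lia|apply: inC_p; lia|apply: H1].
  have [b|b] := boolP ((i.*2.+1 != j) && (i.*2.+1 != l)).
    case/andP: b => b1 b2.
    by exists i, i.*2.+1; split; [lia|lia|apply: inC_q; lia|apply: H1].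
  have [c [c1 c2 c3]] := Rk k hk.
  exists k, c; split; [lia|lia|done|apply: H2 => //]; clear c2 Rk; lia.
have [hk5|hk5] := boolP (k + 5 <= n).
  have [a|a] := boolP ((k.*2 != j) && (k.*2 != l)).
    case/andP: a => a1 a2.
    by exists k, k.*2; split; [lia|lia|apply: inC_p; lia|apply: H2].
  have [b|b] := boolP ((k.*2.+1 != j) && (k.*2.+1 != l)).
    case/andP: b => b1 b2.
    by exists k, k.*2.+1; split; [lia|lia|apply: inC_q; lia|apply: H2].
  have [c [c1 c2 c3]] := Rk i hi.
  exists i, c; split; [lia|lia|done|apply: H1 => //]; clear c2 Rk; lia.
have [c [c1 c2 c3]] := Rk i hi.
have [a|a] := boolP ((c != j) && (c != l)).
  case/andP: a => a1 a2.
  by exists i, c; split; [lia|lia|done|apply: H1].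
have [d [d1 d2 d3]] := Rk k hk.
have [b|b] := boolP ((d != j) && (d != l)).
  case/andP: b => b1 b2.
  by exists k, d; split; [lia|lia|done|apply: H2].
have ml : (m - 2 == j) || (m - 2 == l) by clear Rk c2 d2; lia.
have [e1|e1] := boolP ((n - 3 != i) && (n - 3 != k)).
  case/andP: e1 => e1 e2.
  by exists (n - 3), (m - 2); split; [lia|lia|apply: inC_m; lia|apply: H3; rewrite // eq_sym].
have [e2|e2] := boolP ((n - 2 != i) && (n - 2 != k)).
  case/andP: e2 => e2 e3.
  by exists (n - 2), (m - 2); split; [lia|lia|apply: inC_m; lia|apply: H3; rewrite // eq_sym].
exists (n - 1), (m - 2); split; [lia|lia|apply: inC_m; lia|apply: H3 => //; try lia].
Qed.
End U.

Section G.
Variables n m : nat.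
Hypothesis hm : m + 5 = 2 * n.
Hypothesis hn : 6 <= n.

Definition C0 : {set 'I_n * 'I_m} := [set x : 'I_n * 'I_m | inC n m (val x.1) (val x.2)].

Lemma C0_code : is_idcode (KxK n m) C0.
Proof.
apply/andP; split.
  apply/forallP => -[i j]; have [r [c [hr hc hin hN]]] := Domnat hm hn i j.
  apply/set0Pn; exists (Ordinal hr, Ordinal hc).
  rewrite !inE hin andbT /KxK /direct_prod /Kn_rel /= xpair_eqE -!val_eqE /=.
  move: hN; rewrite /NN; lia.
apply/forallP => -[i j]; apply/forallP => -[k l]; apply/implyP => hne.
have hne' : (val i != val k) || (val j != val l) by move: hne; rewrite xpair_eqE negb_and.
have [r [c [hr hc hin hG]]] := Sepnat hm hn (ltn_ord i) (ltn_ord k) (ltn_ord j) (ltn_ord l) hne'.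
apply/negP => /eqP /setP /(_ (Ordinal hr, Ordinal hc)).
rewrite !inE hin !andbT /KxK /direct_prod /Kn_rel /= !xpair_eqE -!val_eqE /=.
move: hG; rewrite /Gl /NN => hG /eqP; lia.
Qed.

Lemma C0_card : #|C0| <= m.+1.
Proof.
pose f (x : 'I_n * 'I_m) : 'I_m.+1 := inord (if x.2 < m - 2 then nat_of_ord x.2 else nat_of_ord x.2 + nat_of_ord x.1 - (n - 3)).
have := @leq_card_in _ _ f C0; rewrite card_ord; apply.
move=> [i j] [k l]; rewrite !inE /= /f /inC => hx hy /(congr1 (@nat_of_ord _)).
have b1 : (if j < m - 2 then nat_of_ord j else nat_of_ord j + nat_of_ord i - (n - 3)) < m.+1.
  move: hx; case: ifP; have := ltn_ord i; have := ltn_ord j; lia.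
have b2 : (if l < m - 2 then nat_of_ord l else nat_of_ord l + nat_of_ord k - (n - 3)) < m.+1.
  move: hy; case: ifP; have := ltn_ord k; have := ltn_ord l; lia.
rewrite !inordK // => e.
have : (nat_of_ord i == nat_of_ord k) && (nat_of_ord j == nat_of_ord l).
  move: hx hy e b1 b2; rewrite /=; case: ifP; case: ifP; lia.
by case/andP => /eqP /ord_inj -> /eqP /ord_inj ->.
Qed.
End G.

Lemma bigmin_le (T : finType) (P : pred T) (F : T -> nat) x0 i :
  P i -> \big[minn/x0]_(j | P j) F j <= F i.
Proof.
move=> Pi; rewrite unlock.
have : i \in index_enum T by rewrite mem_index_enum.
elim: (index_enum T) => //= a s IH; rewrite in_cons => /orP [/eqP <-|/IH h].
  by rewrite Pi geq_minl.
case: (P a) => //; exact: leq_trans (geq_minr _ _) h.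
Qed.

Theorem theorem4 (n : nat) (hn : 6 <= n) :
  gammaID (KxK n (2 * n - 5)%N) = (2 * n - 4)%N.
Proof.
set m := (2 * n - 5)%N.
have hm : m + 5 = 2 * n by rewrite /m; lia.
apply/eqP; rewrite eqn_leq; apply/andP; split.
  rewrite /gammaID; apply: leq_trans (bigmin_le _ _ (C0_code hm hn)) _.
  apply: leq_trans (C0_card hm hn) _; lia.
rewrite /gammaID; apply: (big_ind (fun x => 2 * n - 4 <= x)).
- rewrite card_prod !card_ord; nia.
- by move=> x y hx hy; rewrite leq_min hx hy.
- move=> C HC; rewrite leqNgt; apply/negP => h.
  apply: (lower HC _ hm hn); rewrite -ltnS; apply: leq_trans h _; lia.
Qed.
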